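(* Let $G^0,G^1,G^2$ be finite-dimensional complex vector spaces with $\dim G^0>\dim G^1\ge 1$. For a subspace $E\subset\mathrm{Hom}(G^0,G^1)$, define $$\phi_E:E\times\mathrm{Hom}(G^1,G^2)\to\mathrm{Hom}(G^0,G^2),\qquad(\alpha,\beta)\mapsto\beta\circ\alpha.$$ (i) If $\dim G^1=1$, then for every integer $k$ with $2\le k\le\dim\mathrm{Hom}(G^0,G^1)$ and every $E$ in a nonempty Zariski open subset of $G(k,\mathrm{Hom}(G^0,G^1))$, we have $\mathrm{Symm}(\phi_E)=\{0\}$. (ii) If $\dim G^1>1$, then for every integer $k$ with $3\le k\le\dim\mathrm{Hom}(G^0,G^1)$ and every $E$ in a nonempty Zariski open subset of $G(k,\mathrm{Hom}(G^0,G^1))$, we have $\mathrm{Symm}(\phi_E)=\{0\}$.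
   Context: For a bilinear map $B:E\times F\to G$, define $$\mathrm{Symm}(B)=\{q\in\mathrm{Hom}(E,F): B(\alpha,q(\alpha'))=B(\alpha',q(\alpha))\ \forall\alpha,\alpha'\in E\}.$$ Thus $\mathrm{Symm}(\phi_E)$ is the set of $q\in\mathrm{Hom}(E,\mathrm{Hom}(G^1,G^2))$ with $q(\alpha')\circ\alpha=q(\alpha)\circ\alpha'$ for all $\alpha,\alpha'\in E$. *)

(* Defs.v *)
From mathcomp Require Import all_boot all_algebra.
From mathcomp Require Import Rstruct.
From mathcomp Require Export complex.
Set Implicit Arguments. Unset Strict Implicit. Unset Printing Implicit Defensive.
Import GRing.Theory Num.Theory.
Local Open Scope ring_scope.

Definition CC : fieldType := complex Rdefinitions.R.

(* G^0 = CC^n0, G^1 = CC^n1, G^2 = CC^n2 (row vectors).  A linear map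
   G^a -> G^b is a matrix 'M[CC]_(na, nb) acting on row vectors on the right,
   so  beta \o alpha  is  alpha *m beta. *)

Definition Symm_phi (n0 n1 n2 : nat) (E : {vspace 'M[CC]_(n0, n1)})
    (q : 'Hom(subvs_of E, 'M[CC]_(n1, n2))) : Prop :=
  forall a a' : subvs_of E, vsval a *m q a' = vsval a' *m q a.

Definition stiefel (n0 n1 k : nat) (b : k.-tuple 'M[CC]_(n0, n1)) :
    'M[CC]_(k, n0 * n1) :=
  \matrix_(i < k) mxvec (tnth b i).

(* These are, up to sign and repetition/zeros, the usual
   Pluecker coordinates (linear injective image of the standard Pluecker vector). *)
Definition pluecker (n0 n1 k : nat) (b : k.-tuple 'M[CC]_(n0, n1)) :
    {ffun {ffun 'I_k -> 'I_(n0 * n1)} -> CC} :=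
  [ffun f : {ffun 'I_k -> 'I_(n0 * n1)} => \det (colsub (fun i => f i) (stiefel b))].

(* A homogeneous polynomial of degree d in variables indexed by a finite type I
   is given by coefficients on exponent vectors m : I -> {0..d}; only monomials
   of total degree d are used. *)
Definition hpoly_eval (I : finType) (d : nat) (c : {ffun {ffun I -> 'I_d.+1} -> CC})
    (x : I -> CC) : CC :=
  \sum_(m : {ffun I -> 'I_d.+1} | (\sum_i (m i : nat))%N == d)
     c m * \prod_i x i ^+ m i.

(* U is a Zariski open subset of G(k, Hom(G0,G1)) (k-dimensional subspaces),
   the Grassmannian carrying the Zariski topology induced by the Pluecker
   embedding: U is the complement in G(k,.) of the common zero locus of a family
   of homogeneous polynomials in the Pluecker coordinates.  (Nonvanishing of a
   homogeneous polynomial at the Pluecker vector does not depend on the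
   chosen basis.) *)
Definition zariski_open_Gr (n0 n1 k : nat) (U : {vspace 'M[CC]_(n0, n1)} -> Prop) : Prop :=
  (forall E, U E -> \dim E = k) /\
  exists (J : Type) (d : J -> nat)
         (c : forall j : J, {ffun {ffun {ffun 'I_k -> 'I_(n0 * n1)} -> 'I_(d j).+1} -> CC}),
    forall E : {vspace 'M[CC]_(n0, n1)}, \dim E = k ->
      (U E <-> exists j : J, exists b : k.-tuple 'M[CC]_(n0, n1),
                  basis_of E b /\ hpoly_eval (c j) (pluecker b) != 0).

(* Main.v *)
Require Import Defs.
From mathcomp Require Import all_boot all_algebra.
From mathcomp Require Import Rstruct complex.
Import GRing.Theory Num.Theory.
Local Open Scope ring_scope.
Set Implicit Arguments. Unset Strict Implicit.

Definition ishom (I : finType) (d : nat) (F : (I -> CC) -> CC) :=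
  exists c : {ffun {ffun I -> 'I_d.+1} -> CC}, forall x, F x = hpoly_eval c x.

Definition mdeg (I : finType) n (m : {ffun I -> 'I_n}) : nat := (\sum_i (m i : nat))%N.
Definition mon (I : finType) n (m : {ffun I -> 'I_n}) (x : I -> CC) : CC :=
  \prod_i x i ^+ m i.

Lemma ishom_ext (I : finType) d (F G : (I -> CC) -> CC) :
  (forall x, F x = G x) -> ishom d F -> ishom d G.
Proof. by move=> FG [c Hc]; exists c => x; rewrite -FG. Qed.

Lemma ishom_deg (I : finType) d d' (F : (I -> CC) -> CC) :
  d = d' -> ishom d F -> ishom d' F.
Proof. by move=> ->. Qed.

Lemma ishom0 (I : finType) d : ishom d (fun _ : I -> CC => 0).
Proof. by exists 0 => x; rewrite /hpoly_eval big1 // => m _; rewrite ffunE mul0r. Qed.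

Lemma ishom_add (I : finType) d (F G : (I -> CC) -> CC) :
  ishom d F -> ishom d G -> ishom d (fun x => F x + G x).
Proof.
move=> [c1 H1] [c2 H2]; exists (c1 + c2) => x.
rewrite H1 H2 /hpoly_eval -big_split /=; apply: eq_bigr => m _.
by rewrite ffunE mulrDl.
Qed.

Lemma ishom_scale (I : finType) d a (F : (I -> CC) -> CC) :
  ishom d F -> ishom d (fun x => a * F x).
Proof.
move=> [c1 H1]; exists (a *: c1) => x.
rewrite H1 /hpoly_eval big_distrr /=; apply: eq_bigr => m _.
by rewrite ffunE mulrA.
Qed.

Lemma ishom_opp (I : finType) d (F : (I -> CC) -> CC) :
  ishom d F -> ishom d (fun x => - F x).
Proof.
move=> H; apply: ishom_ext (ishom_scale (-1) H) => x; by rewrite mulN1r.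
Qed.

Lemma ishom_sub (I : finType) d (F G : (I -> CC) -> CC) :
  ishom d F -> ishom d G -> ishom d (fun x => F x - G x).
Proof. by move=> HF HG; apply: ishom_add HF (ishom_opp HG). Qed.

Lemma ishom_const (I : finType) a : ishom 0 (fun _ : I -> CC => a).
Proof.
exists [ffun _ => a] => x; rewrite /hpoly_eval.
pose m0 : {ffun I -> 'I_1} := [ffun _ => ord0].
have allm0 : forall m : {ffun I -> 'I_1}, m = m0.
  by move=> m; apply/ffunP => i; rewrite ffunE; apply/val_inj; case: (m i) => -[].
rewrite (big_pred1 m0); last first.
  move=> m; rewrite /= (allm0 m) eqxx. apply/eqP; apply: big1 => i _; by rewrite ffunE.
by rewrite ffunE big1 ?mulr1 // => i _; rewrite ffunE expr0.
Qed.

Definition eunit (I : finType) (i : I) : {ffun I -> 'I_2} :=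
  [ffun j => if j == i then ord_max else ord0].

Lemma ishom_coord (I : finType) (i : I) : ishom 1 (fun x : I -> CC => x i).
Proof.
exists [ffun m => if m == eunit i then 1 else 0] => x; rewrite /hpoly_eval.
rewrite (bigD1 (eunit i)); last first.
  by rewrite (bigD1 i) //= big1 ?ffunE ?eqxx // => j /negbTE ji; rewrite ffunE ji.
have -> : \sum_(m : {ffun I -> 'I_2} | ((\sum_i0 (m i0 : nat))%N == 1%N) && (m != eunit i))
   [ffun m => if m == eunit i then 1 else 0] m * \prod_i0 x i0 ^+ m i0 = 0.
  by apply: big1 => m /andP[_ /negbTE ne]; rewrite ffunE ne mul0r.
rewrite Monoid.mulm1 ffunE eqxx mul1r (bigD1 i) // big1 ?Monoid.mulm1 ?ffunE ?eqxx ?expr1 //.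
by move=> j /negbTE ji; rewrite ffunE ji expr0.
Qed.

Lemma ishom_mul (I : finType) d e (F G : (I -> CC) -> CC) :
  ishom d F -> ishom e G -> ishom (d + e)%N (fun x => F x * G x).
Proof.
move=> [c1 H1] [c2 H2].
pose add (p : {ffun I -> 'I_d.+1} * {ffun I -> 'I_e.+1}) : {ffun I -> 'I_(d+e).+1} :=
  [ffun i => inord (p.1 i + p.2 i)].
have addE p i : (add p i : nat) = (p.1 i + p.2 i)%N.
  rewrite ffunE inordK // ltnS; apply: leq_add; rewrite -ltnS; exact: ltn_ord.
pose Q (p : {ffun I -> 'I_d.+1} * {ffun I -> 'I_e.+1}) :=
  ((\sum_i (p.1 i : nat))%N == d) && ((\sum_i (p.2 i : nat))%N == e).
exists [ffun m => \sum_(p | Q p && (add p == m)) c1 p.1 * c2 p.2] => x.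
rewrite H1 H2 /hpoly_eval big_distrl /=.
rewrite (eq_bigr (fun m1 : {ffun I -> 'I_d.+1} => \sum_(m2 : {ffun I -> 'I_e.+1} | (\sum_i (m2 i : nat))%N == e)
   (c1 m1 * c2 m2) * \prod_i x i ^+ add (m1, m2) i)); last first.
  move=> m1 _; rewrite big_distrr /=; apply: eq_bigr => m2 _.
  rewrite mulrACA -big_split; apply: f_equal; apply: eq_bigr => i _.
  by rewrite addE exprD.
rewrite pair_big.
rewrite (partition_big add (fun m : {ffun I -> 'I_(d+e).+1} => (\sum_i (m i : nat))%N == d + e)); last first.
  move=> p /andP[/eqP H1d /eqP H2e]; apply/eqP; rewrite (eq_bigr (fun i => (p.1 i + p.2 i)%N)); last by move=> i _; rewrite addE.
  by rewrite big_split H1d H2e.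
apply: eq_bigr => m _; rewrite ffunE big_distrl; apply: eq_bigr => p /andP[_ /eqP pm]. by rewrite -pm; case: p {pm}.
Qed.

Lemma ishom_sum (I : finType) d (J : finType) (P : pred J) (F : J -> (I -> CC) -> CC) :
  (forall j, ishom d (F j)) -> ishom d (fun x => \sum_(j | P j) F j x).
Proof.
move=> HF; rewrite /ishom.
elim: (index_enum J) => [|j s IH].
  by apply: ishom_ext (ishom0 _ d) => x; rewrite big_nil.
case Pj: (P j).
  by apply: ishom_ext (ishom_add (HF j) IH) => x; rewrite big_cons Pj.
by apply: ishom_ext IH => x; rewrite big_cons Pj.
Qed.

Lemma ishom_prod (I : finType) n e (F : 'I_n -> (I -> CC) -> CC) :
  (forall i, ishom e (F i)) -> ishom (n * e)%N (fun x => \prod_i F i x).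
Proof.
elim: n F => [|n IH] F HF.
  by apply: ishom_ext (ishom_const _ 1) => x; rewrite big_ord0.
apply: (ishom_deg (esym (mulSnr n e))).
have H := ishom_mul (IH (fun i => F (widen_ord (leqnSn n) i)) (fun i => HF _)) (HF ord_max).
by apply: ishom_ext H => x; rewrite big_ord_recr.
Qed.

Lemma ishom_det (I : finType) n e (A : (I -> CC) -> 'M[CC]_n) :
  (forall i j, ishom e (fun x => A x i j)) -> ishom (n * e)%N (fun x => \det (A x)).
Proof.
move=> HA; apply: ishom_ext; first by move=> x; rewrite /determinant.
apply: ishom_sum => s; apply: ishom_scale; apply: ishom_prod => i; exact: HA.
Qed.

Lemma ishom_mulmx (I : finType) d e p q r (A : (I -> CC) -> 'M[CC]_(p, q))
   (B : (I -> CC) -> 'M[CC]_(q, r)) :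
  (forall i j, ishom d (fun x => A x i j)) -> (forall i j, ishom e (fun x => B x i j)) ->
  forall i j, ishom (d + e)%N (fun x => (A x *m B x) i j).
Proof.
move=> HA HB i j; apply: ishom_ext; first by move=> x; rewrite mxE.
by apply: ishom_sum => l; apply: ishom_mul.
Qed.

Lemma ishom_adj (I : finType) n e (A : (I -> CC) -> 'M[CC]_n) :
  (forall i j, ishom e (fun x => A x i j)) ->
  forall i j, ishom (n.-1 * e)%N (fun x => \adj (A x) i j).
Proof.
move=> HA i j; apply: ishom_ext; first by move=> x; rewrite mxE.
apply: ishom_scale; apply: ishom_det => a b.
by apply: ishom_ext (HA _ _) => x; rewrite !mxE.
Qed.

Lemma natCC_neq0 n : (n.+1%:R : CC) != 0.
Proof. have := (@pnatr_eq0 (complex Rdefinitions.R) n.+1). move=> H. apply/negP => /eqP H2. move: H. rewrite H2 eqxx. done. Qed.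

Definition upd k N (f : {ffun 'I_k -> 'I_N}) (i : 'I_k) (c : 'I_N) : {ffun 'I_k -> 'I_N} :=
  [ffun j => if j == i then c else f j].

Definition matof n0 n1 k (f : {ffun 'I_k -> 'I_(n0 * n1)}) (a : 'I_k -> CC)
  (x : {ffun 'I_k -> 'I_(n0 * n1)} -> CC) : 'M[CC]_(n0, n1) :=
  vec_mx (\row_c \sum_i a i * x (upd f i c)).

Lemma det_upd n0 n1 k (b : k.-tuple 'M[CC]_(n0, n1)) f i c :
  \det (colsub (upd f i c) (stiefel b)) =
  \sum_l \adj (colsub f (stiefel b)) i l * stiefel b l c.
Proof.
rewrite (expand_det_col _ i); apply: eq_bigr => l _.
rewrite mulrC [\adj _ _ _]mxE !mxE ffunE eqxx; congr (_ * _).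
rewrite /cofactor; congr (_ * \det _); apply/matrixP => a j; rewrite !mxE ffunE.
by rewrite eq_sym (negbTE (neq_lift _ _)).
Qed.

Lemma matofE n0 n1 k (b : k.-tuple 'M[CC]_(n0, n1)) f a :
  matof f a (pluecker b) =
  \sum_i a i *: \sum_l \adj (colsub f (stiefel b)) i l *: tnth b l.
Proof.
apply: (can_inj mxvecK); rewrite vec_mxK; apply/rowP => c.
rewrite !mxE linear_sum summxE; apply: eq_bigr => i _.
rewrite ffunE det_upd linearZ mxE linear_sum summxE; congr (_ * _).
apply: eq_bigr => l _; rewrite linearZ /= !mxE. done.
Qed.

Lemma matof_mem n0 n1 k (b : k.-tuple 'M[CC]_(n0, n1)) f a :
  matof f a (pluecker b) \in <<b>>%VS.
Proof.
rewrite matofE; apply: memv_suml => i _; apply: memvZ.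
apply: memv_suml => l _; apply: memvZ; apply: memv_span; exact: mem_tnth.
Qed.

Lemma generic n0 n1 n2 k r (f : {ffun 'I_k -> 'I_(n0 * n1)}) (alpha : 'I_r -> 'I_k -> CC)
  (Qf : ('I_r -> 'M[CC]_(n0, n1)) -> CC) D :
  ishom D (fun x => Qf (fun s => matof f (alpha s) x)) ->
  (forall (E : {vspace 'M[CC]_(n0, n1)}) (M : 'I_r -> 'M[CC]_(n0, n1)),
     (forall s, M s \in E) -> Qf M != 0 ->
     forall q : 'Hom(subvs_of E, 'M[CC]_(n1, n2)), Symm_phi q -> q = 0) ->
  (exists b : k.-tuple 'M[CC]_(n0, n1),
     free b /\ Qf (fun s => matof f (alpha s) (pluecker b)) != 0) ->
  exists U : {vspace 'M[CC]_(n0, n1)} -> Prop,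
    [/\ zariski_open_Gr k U, exists E, U E &
        forall E, U E ->
          forall q : 'Hom(subvs_of E, 'M[CC]_(n1, n2)), Symm_phi q <-> q = 0].
Proof.
move=> [c Hc] Hgood [b0 [fb0 Qb0]].
exists (fun E => \dim E = k /\ exists b : k.-tuple 'M[CC]_(n0, n1),
          basis_of E b /\ hpoly_eval c (pluecker b) != 0); split.
- split; first by move=> E [].
  exists unit, (fun _ => D), (fun _ => c) => E dE; split.
    by move=> [_ [b [Hb Hn]]]; exists tt, b.
  by move=> [_ [b [Hb Hn]]]; split => //; exists b.
- exists <<b0>>%VS; split.
    by move/eqP: fb0 => ->; rewrite size_tuple.
  by exists b0; rewrite /basis_of eqxx fb0 -Hc.
- move=> E [_ [b [Hb Hn]]] q; split; last first.
    by move=> -> a a'; rewrite !lfunE /= !mulmx0.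
  apply: (Hgood E (fun s => matof f (alpha s) (pluecker b))); last by rewrite Hc.
  move=> s; case/andP: Hb => /eqP <- _; exact: matof_mem.
Qed.

Lemma inj_from_unit n p (S : 'M[CC]_n) (x : 'M[CC]_(n, p)) :
  \det S != 0 -> S *m x = 0 -> x = 0.
Proof.
move=> dS Sx; have uS : S \in unitmx by rewrite unitmxE unitfE.
by rewrite -(mulKmx uS x) Sx mulmx0.
Qed.

Definition Q3 n0 m (top sh : 'I_m -> 'I_n0) (M : 'I_3 -> 'M[CC]_(n0, m)) : CC :=
  let A := M 0 in let B := M 1 in let C := M 2%:R in
  let Au := rowsub top A in
  \det Au * \det (rowsub sh (B *m (\adj Au *m rowsub top C) - C *m (\adj Au *m rowsub top B))).

Lemma good3 n0 m n2 (top sh : 'I_m -> 'I_n0) (E : {vspace 'M[CC]_(n0, m)})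
  (M : 'I_3 -> 'M[CC]_(n0, m)) :
  (forall s, M s \in E) -> Q3 top sh M != 0 ->
  forall q : 'Hom(subvs_of E, 'M[CC]_(m, n2)), Symm_phi q -> q = 0.
Proof.
move=> HM; rewrite /Q3 mulf_eq0 negb_or => /andP[dA dS] q Hq.
set A := M 0 in dA dS *; set B := M 1 in dS *; set C := M 2%:R in dS *.
pose a : subvs_of E := Sub A (HM 0).
pose bb : subvs_of E := Sub B (HM 1).
pose cc : subvs_of E := Sub C (HM 2%:R).
have HAB : A *m q bb = B *m q a by have := Hq a bb.
have HAC : A *m q cc = C *m q a by have := Hq a cc.
have HBC : B *m q cc = C *m q bb by have := Hq bb cc.
set Au := rowsub top A in dA dS *.
have x0 : q a = 0.
  apply: (inj_from_unit dS).
  rewrite mul_rowsub_mx mulmxBl -!mulmxA !mul_rowsub_mx -HAC -HAB -!mul_rowsub_mx.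
  rewrite -/Au !(mulmxA (\adj Au)) mul_adj_mx !mul_scalar_mx -!scalemxAr HBC subrr.
  by apply/matrixP => i j; rewrite !mxE.
apply/lfunP => a'; rewrite zero_lfunE.
apply: (inj_from_unit dA); rewrite mul_rowsub_mx.
have := Hq a a'; rewrite x0 mulmx0 => ->.
by apply/matrixP => i j; rewrite !mxE.
Qed.

Definition Q2 n0 m (top sh : 'I_m -> 'I_n0) (M : 'I_2 -> 'M[CC]_(n0, m)) : CC :=
  let A := M 0 in let B := M 1 in
  let Au := rowsub top A in
  \det Au * \det (rowsub sh (A *m (\adj Au *m rowsub top B) - \det Au *: B)).

Lemma good2 n0 m n2 (top sh : 'I_m -> 'I_n0) (E : {vspace 'M[CC]_(n0, m)})
  (M : 'I_2 -> 'M[CC]_(n0, m)) :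
  (forall s, M s \in E) -> Q2 top sh M != 0 ->
  forall q : 'Hom(subvs_of E, 'M[CC]_(m, n2)), Symm_phi q -> q = 0.
Proof.
move=> HM; rewrite /Q2 mulf_eq0 negb_or => /andP[dA dS] q Hq.
set A := M 0 in dA dS *; set B := M 1 in dS *.
pose a : subvs_of E := Sub A (HM 0).
pose bb : subvs_of E := Sub B (HM 1).
have HAB : A *m q bb = B *m q a by have := Hq a bb.
set Au := rowsub top A in dA dS *.
have x0 : q a = 0.
  apply: (inj_from_unit dS).
  rewrite mul_rowsub_mx mulmxBl -!mulmxA !mul_rowsub_mx -HAB -!mul_rowsub_mx.
  rewrite -/Au !(mulmxA (\adj Au)) mul_adj_mx !mul_scalar_mx -!scalemxAr -scalemxAl HAB subrr.
  by apply/matrixP => i j; rewrite !mxE.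
apply/lfunP => a'; rewrite zero_lfunE.
apply: (inj_from_unit dA); rewrite mul_rowsub_mx.
have := Hq a a'; rewrite x0 mulmx0 => ->.
by apply/matrixP => i j; rewrite !mxE.
Qed.

Lemma ishom_matof n0 n1 k (f : {ffun 'I_k -> 'I_(n0 * n1)}) a (i : 'I_n0) (j : 'I_n1) :
  ishom 1 (fun x => matof f a x i j).
Proof.
apply: ishom_ext; first by move=> x; rewrite /matof !mxE.
apply: ishom_sum => l; apply: ishom_scale; exact: ishom_coord.
Qed.

Lemma ishom_rowsub (I : finType) e p p' q (g : 'I_p' -> 'I_p) (A : (I -> CC) -> 'M[CC]_(p, q)) :
  (forall i j, ishom e (fun x => A x i j)) -> forall i j, ishom e (fun x => rowsub g (A x) i j).
Proof. by move=> HA i j; apply: ishom_ext (HA (g i) j) => x; rewrite mxE. Qed.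

Lemma ishom_subM (I : finType) e p q (A B : (I -> CC) -> 'M[CC]_(p, q)) :
  (forall i j, ishom e (fun x => A x i j)) -> (forall i j, ishom e (fun x => B x i j)) ->
  forall i j, ishom e (fun x => (A x - B x) i j).
Proof.
by move=> HA HB i j; apply: ishom_ext (ishom_sub (HA i j) (HB i j)) => x; rewrite !mxE.
Qed.

Lemma ishom_Q3 n0 m k (top sh : 'I_m -> 'I_n0) (f : {ffun 'I_k -> 'I_(n0 * m)})
  (alpha : 'I_3 -> 'I_k -> CC) :
  exists D, ishom D (fun x => Q3 top sh (fun s => matof f (alpha s) x)).
Proof.
eexists; rewrite /Q3.
have HM s := ishom_matof f (alpha s).
have HAu := ishom_rowsub top (HM 0).
apply: ishom_mul; first exact: ishom_det.
apply: ishom_det; apply: ishom_rowsub; apply: ishom_subM.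
  apply: ishom_mulmx => //; apply: ishom_mulmx; first exact: ishom_adj.
  exact: ishom_rowsub.
apply: ishom_mulmx => //; apply: ishom_mulmx; first exact: ishom_adj.
exact: ishom_rowsub.
Qed.

Lemma ishom_Q2 n0 m k (top sh : 'I_m -> 'I_n0) (f : {ffun 'I_k -> 'I_(n0 * m)})
  (alpha : 'I_2 -> 'I_k -> CC) : (0 < m)%N ->
  exists D, ishom D (fun x => Q2 top sh (fun s => matof f (alpha s) x)).
Proof.
move=> m0; eexists; rewrite /Q2.
have HM s := ishom_matof f (alpha s).
have HAu := ishom_rowsub top (HM 0).
apply: ishom_mul; first exact: ishom_det.
apply: ishom_det; apply: ishom_rowsub; apply: ishom_subM.
  apply: ishom_mulmx => //; apply: ishom_mulmx; first exact: ishom_adj.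
  exact: ishom_rowsub.
move=> i j; apply: ishom_ext.
  by move=> x; rewrite mxE.
apply: (ishom_deg (d := (m * 1 + 1)%N)); first by rewrite muln1 addnC muln1 addn1 prednK.
by apply: ishom_mul; [exact: ishom_det|].
Qed.

Definition dlt n0 n1 (c : 'I_(n0 * n1)) : 'M[CC]_(n0, n1) := vec_mx (delta_mx 0 c).

Lemma dltE n0 n1 (c c' : 'I_(n0 * n1)) : mxvec (dlt c) 0 c' = (c' == c)%:R.
Proof. by rewrite /dlt vec_mxK mxE. Qed.

Lemma ext_f N k r' (p : 'I_r'.+1 -> 'I_N) : injective p -> (k <= N)%N ->
  exists f : {ffun 'I_k -> 'I_N}, injective f /\
    forall (i : 'I_k) (t : 'I_r'.+1), (i : nat) = t -> f i = p t.
Proof.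
move=> pinj kN.
pose ps := map p (enum 'I_r'.+1).
pose s := ps ++ [seq x <- enum 'I_N | x \notin ps].
have us : uniq s.
  rewrite cat_uniq map_inj_uniq // enum_uniq filter_uniq ?enum_uniq // andbT /=.
  by apply/hasPn => x; rewrite mem_filter => /andP[].
have ss : size s = N.
  rewrite -[RHS](size_enum_ord N); apply: perm_size; apply: uniq_perm => //; first exact: enum_uniq.
  move=> x; rewrite mem_cat mem_filter mem_enum; by case: (x \in ps).
exists [ffun i : 'I_k => nth (p ord0) s i]; split.
  move=> i j; rewrite !ffunE => /eqP; rewrite nth_uniq ?ss //.
    by move=> /eqP; apply: val_inj.
  exact: leq_trans (ltn_ord i) kN.
  exact: leq_trans (ltn_ord j) kN.
move=> i t it; rewrite ffunE it nth_cat size_map size_enum_ord ltn_ord.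
by rewrite (nth_map ord0) ?size_enum_ord // nth_ord_enum.
Qed.

Lemma sum_delta (I : finType) (P : pred I) (c : I -> CC) (j : I) :
  \sum_(l | P l) c l * (j == l)%:R = if P j then c j else 0.
Proof.
rewrite (eq_bigr (fun l => if l == j then c j else 0)); last first.
  by move=> l _; rewrite eq_sym; case: eqP => [->|]; rewrite ?mulr1 ?mulr0.
rewrite -big_mkcondr.
case: ifP => Pj.
  by rewrite (big_pred1 j) // => l /=; case: eqP => [->|]; rewrite ?Pj ?andbT ?andbF.
by rewrite big_pred0 // => l; case: eqP => [->|]; rewrite ?Pj ?andbF.
Qed.

Lemma sum_deltaG n0 n1 (I : finType) (P : pred I) (a : I -> CC) (F : I -> 'M[CC]_(n0, n1)) j :
  (forall l, P l -> a l = (l == j)%:R) -> P j -> \sum_(l | P l) a l *: F l = F j.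
Proof.
move=> Ha Pj; rewrite (eq_bigr (fun l => if l == j then F j else 0)); last first.
  by move=> l Pl; rewrite Ha //; case: eqP => [->|]; rewrite ?scale1r ?scale0r.
rewrite -big_mkcondr (big_pred1 j) // => l /=; case: eqP => [->|]; by rewrite ?Pj ?andbT ?andbF.
Qed.

Definition coefM n0 n1 (M : 'M[CC]_(n0, n1)) (c : 'I_(n0 * n1)) : CC := mxvec M 0 c.

Definition bfun n0 n1 k r' (M0 : 'I_r'.+1 -> 'M[CC]_(n0, n1)) (f : {ffun 'I_k -> 'I_(n0 * n1)})
   (i : 'I_k) : 'M[CC]_(n0, n1) :=
  if (i < r'.+1)%N then M0 (inord i) - \sum_(j : 'I_k | ~~ (j < r'.+1)%N) coefM (M0 (inord i)) (f j) *: dlt (f j)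
  else dlt (f i).

Definition alphaf n0 n1 k r' (M0 : 'I_r'.+1 -> 'M[CC]_(n0, n1)) (f : {ffun 'I_k -> 'I_(n0 * n1)})
  (s : 'I_r'.+1) (i : 'I_k) : CC :=
  if (i < r'.+1)%N then ((i : nat) == (s : nat))%:R else coefM (M0 s) (f i).

Lemma example_b n0 n1 k r' (p : 'I_r'.+1 -> 'I_(n0 * n1)) (M0 : 'I_r'.+1 -> 'M[CC]_(n0, n1)) :
  (r'.+1 <= k)%N -> (k <= n0 * n1)%N ->
  (forall s t, mxvec (M0 s) 0 (p t) = (s == t)%:R) ->
  exists f : {ffun 'I_k -> 'I_(n0 * n1)}, exists alpha : 'I_r'.+1 -> 'I_k -> CC,
  exists b : k.-tuple 'M[CC]_(n0, n1),
    free b /\ forall s, matof f (alpha s) (pluecker b) = M0 s.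
Proof.
move=> rk kN HM.
have pinj : injective p.
  move=> s t pst; apply/eqP; have := HM s t; rewrite -pst HM eqxx.
  case: (s == t) => //= H; move: H; rewrite mulr1n mulr0n => H10; move: (oner_neq0 CC); by rewrite H10 eqxx.
have [f [finj fp]] := ext_f pinj kN.
exists f, (alphaf M0 f), [tuple bfun M0 f i | i < k].
have BfI i j : mxvec (bfun M0 f i) 0 (f j) = (i == j)%:R.
  rewrite /bfun; case: ifP => ir; last first.
    rewrite dltE (inj_eq finj) eq_sym; done.
  rewrite linearB mxE linear_sum mxE summxE.
  rewrite (eq_bigr (fun l => coefM (M0 (inord i)) (f l) * (j == l)%:R)); last first.
    by move=> l _; rewrite linearZ /= mxE dltE (inj_eq finj) eq_sym.
  rewrite sum_delta -leqNgt; case: (ltnP j r'.+1) => jr.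
    rewrite subr0 (fp j (Ordinal jr)) // HM; congr (_%:R).
    by rewrite -[inord i == _]val_eqE /= inordK.
  rewrite subrr; case: eqP => // ij; move: ir; by rewrite ij ltnNge jr.
split.
  apply/freeP => lam H i.
  have := congr1 (fun M => mxvec M 0 (f i)) H; rewrite linear_sum summxE.
  rewrite (eq_bigr (fun l => lam l * (i == l)%:R)); last first.
    move=> l _; rewrite linearZ /= mxE (nth_map l) ?size_enum_ord // nth_ord_enum BfI; by rewrite eq_sym.
  by rewrite sum_delta linear0 mxE.
move=> s; rewrite matofE.
have -> : colsub f (stiefel [tuple bfun M0 f i | i < k]) = 1%:M.
  by apply/matrixP => i j; rewrite /stiefel !mxE tnth_mktuple BfI.
rewrite adj1.
rewrite (eq_bigr (fun i => alphaf M0 f s i *: bfun M0 f i)); last first.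
  move=> i _; rewrite (@sum_deltaG _ _ _ _ _ _ i) ?tnth_mktuple //.
  by move=> l _; rewrite mxE eq_sym.
rewrite (bigID (fun i : 'I_k => (i < r'.+1)%N)).
rewrite (@sum_deltaG _ _ _ _ _ _ (widen_ord rk s)); last first.
- by rewrite /= ltn_ord.
- by move=> l /= lr; rewrite /alphaf lr.
rewrite (eq_bigr (fun i => coefM (M0 s) (f i) *: dlt (f i))); last first.
  by move=> i /negbTE ir; rewrite /alphaf /bfun ir.
rewrite /bfun /= ltn_ord.
have -> : inord (widen_ord rk s) = s by apply/val_inj; rewrite /= inordK.
by rewrite subrK.
Qed.

Definition A0 n0 m : 'M[CC]_(n0, m) := \matrix_(i, j) ((i : nat) == j)%:R.
Definition B0 n0 m : 'M[CC]_(n0, m) := \matrix_(i, j) ((i : nat) == j.+1)%:R.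
Definition C0 n0 m : 'M[CC]_(n0, m) :=
  \matrix_(i, j) (if ((i : nat) < m)%N then ((i : nat) == j)%:R * (i : nat)%:R
                  else (((i : nat) == m) && ((j : nat) == 0%N))%:R).

Definition topf n0 m (hm : (m < n0)%N) (i : 'I_m) : 'I_n0 := widen_ord (ltnW hm) i.
Definition shf n0 m (hm : (m < n0)%N) (i : 'I_m) : 'I_n0 :=
  Ordinal (leq_ltn_trans (ltn_ord i) hm).

Lemma Au_one n0 m (hm : (m < n0)%N) : rowsub (topf hm) (A0 n0 m) = 1%:M.
Proof. by apply/matrixP => i j; rewrite !mxE. Qed.

Lemma Bt_zero1 n0 (hm : (1 < n0)%N) : rowsub (topf hm) (B0 n0 1) = 0.
Proof. by apply/matrixP => i j; rewrite !mxE; case: i => -[]. Qed.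

Definition M2 n0 : 'I_2 -> 'M[CC]_(n0, 1) := fun s => if (s : nat) == 0%N then A0 n0 1 else B0 n0 1.

Lemma Q2_val n0 (hm : (1 < n0)%N) : Q2 (topf hm) (shf hm) (M2 n0) = -1.
Proof.
rewrite /Q2 /M2 /=. rewrite Au_one Bt_zero1 adj1 det1 mulmx0 mulmx0 sub0r scale1r mul1r.
rewrite det_mx11 !mxE /=. done.
Qed.

Definition M3 n0 m : 'I_3 -> 'M[CC]_(n0, m) := fun s =>
  if (s : nat) == 0%N then A0 n0 m else if (s : nat) == 1%N then B0 n0 m else C0 n0 m.

Lemma E1 n0 m (hm : (m < n0)%N) (i j : 'I_m) :
  (B0 n0 m *m rowsub (topf hm) (C0 n0 m)) (shf hm i) j = (i == j)%:R * (i : nat)%:R.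
Proof.
rewrite mxE (eq_bigr (fun l => (rowsub (topf hm) (C0 n0 m)) l j * (i == l)%:R)); last first.
  by move=> l _; rewrite mulrC !mxE.
by rewrite sum_delta !mxE /= ltn_ord.
Qed.

Lemma E2 n0 m (hm : (m < n0)%N) (i j : 'I_m) :
  (C0 n0 m *m rowsub (topf hm) (B0 n0 m)) (shf hm i) j =
  if (i.+1 < m)%N then (i == j)%:R * (i.+1)%:R else 0.
Proof.
rewrite mxE; case: (ltnP i.+1 m) => im.
  rewrite (eq_bigr (fun l : 'I_m => ((i.+1)%:R * ((l : nat) == j.+1)%:R) * ((Ordinal im) == l)%:R)); last first.
    by move=> l _; rewrite !mxE /= im -mulrA mulrC.
  by rewrite sum_delta /= mulrC.
apply: big1 => l _; rewrite !mxE /= ltnNge im /=.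
by case: l => -[|l] ? /=; rewrite ?mulr0 ?andbF ?mul0r.
Qed.

Lemma Q3_neq0 n0 m (hm : (m < n0)%N) : (1 < m)%N -> Q3 (topf hm) (shf hm) (M3 n0 m) != 0.
Proof.
move=> m1.
rewrite /Q3 /M3 /= Au_one adj1 det1 mul1r !mul1mx.
pose d : 'rV[CC]_m := \row_i ((i : nat)%:R - (if (i.+1 < m)%N then (i.+1)%:R else 0)).
have -> : rowsub (shf hm) (B0 n0 m *m rowsub (topf hm) (C0 n0 m) -
                            C0 n0 m *m rowsub (topf hm) (B0 n0 m)) = diag_mx d.
  apply/matrixP => i j; rewrite mxE [in LHS]mxE [X in _ + X]mxE E1 E2 !mxE.
  case: (eqVneq i j) => [->|/negbTE ij]; rewrite ?eqxx ?ij ?mulr1n ?mulr0n ?mul1r ?mul0r //.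
  by rewrite if_same subrr.
rewrite det_diag; apply/prodf_neq0 => i _; rewrite mxE.
case: ifP => im.
  rewrite -natr1 opprD addrA subrr sub0r oppr_eq0; exact: oner_neq0.
have Hm : (i.+1 = m)%N by apply/eqP; rewrite eqn_leq (ltn_ord i) leqNgt im.
rewrite subr0; have : (1 < (i : nat).+1)%N by rewrite Hm.
case: (i : nat) => [|i'] //= _.
exact: natCC_neq0.
Qed.

Unset Implicit Arguments.

Theorem mainTheorem3 (n0 n1 n2 : nat) (hdim : (n1 < n0)%N) (hn1 : (1 <= n1)%N) :
  ((n1 = 1)%N ->
     forall k : nat, (2 <= k <= n0 * n1)%N ->
       exists U : {vspace 'M[CC]_(n0, n1)} -> Prop,
         [/\ zariski_open_Gr k U, exists E, U E &
             forall E, U E ->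
               forall q : 'Hom(subvs_of E, 'M[CC]_(n1, n2)),
                 Symm_phi q <-> q = 0]) /\
  ((1 < n1)%N ->
     forall k : nat, (3 <= k <= n0 * n1)%N ->
       exists U : {vspace 'M[CC]_(n0, n1)} -> Prop,
         [/\ zariski_open_Gr k U, exists E, U E &
             forall E, U E ->
               forall q : 'Hom(subvs_of E, 'M[CC]_(n1, n2)),
                 Symm_phi q <-> q = 0]).
Proof.
split.
- move=> n11 k /andP[k2 kN]; subst n1.
  pose c0 : 'I_1 := ord0.
  pose r0 : 'I_n0 := Ordinal (leq_ltn_trans (leq0n 1) hdim).
  pose r1 : 'I_n0 := Ordinal hdim.
  pose p2 (t : 'I_2) : 'I_(n0 * 1) := mxvec_index (if (t : nat) == 0%N then r0 else r1) c0.
  have HM s t : mxvec (M2 n0 s) 0 (p2 t) = (s == t)%:R.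
    rewrite mxvecE; case: s => [[|[|s]] Hs] //; case: t => [[|[|t]] Ht] //;
      by rewrite /M2 !mxE.
  have [f [alpha [b [fb Hb]]]] := example_b (M0 := M2 n0) k2 kN HM.
  have [D HD] := ishom_Q2 (topf hdim) (shf hdim) f alpha (isT : (0 < 1)%N).
  apply: (@generic _ _ _ _ _ f alpha (Q2 (topf hdim) (shf hdim)) D HD).
  + move=> E M HMe HQ q Hq; exact: good2 HMe HQ q Hq.
  + exists b; split => //.
    have -> : Q2 (topf hdim) (shf hdim) (fun s => matof f (alpha s) (pluecker b)) =
              Q2 (topf hdim) (shf hdim) (M2 n0) by rewrite /Q2 !Hb.
    by rewrite Q2_val oppr_eq0 oner_neq0.
- move=> m1 k /andP[k3 kN].
  have hm0 : (0 < n1)%N := hn1.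
  pose c0 : 'I_n1 := Ordinal hm0.
  pose r0 : 'I_n0 := Ordinal (leq_ltn_trans (leq0n n1) hdim).
  pose r1 : 'I_n0 := Ordinal (leq_ltn_trans hn1 hdim).
  pose rm : 'I_n0 := Ordinal hdim.
  pose p3 (t : 'I_3) : 'I_(n0 * n1) :=
    mxvec_index (if (t : nat) == 0%N then r0 else if (t : nat) == 1%N then r1 else rm) c0.
  have n10 : (n1 == 0)%N = false by rewrite eqn_leq leqNgt hn1.
  have n11 : (n1 == 1)%N = false by rewrite eqn_leq leqNgt m1.
  have HM s t : mxvec (M3 n0 n1 s) 0 (p3 t) = (s == t)%:R.
    rewrite mxvecE; case: s => [[|[|[|s]]] Hs] //; case: t => [[|[|[|t]]] Ht] //;
      rewrite /M3 !mxE /= ?n10 ?n11 ?m1 ?ltnn ?eqxx ?hm0 //= ?mulr0. all: try by rewrite ?mul0r.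
  have [f [alpha [b [fb Hb]]]] := example_b (M0 := M3 n0 n1) k3 kN HM.
  have [D HD] := ishom_Q3 (topf hdim) (shf hdim) f alpha.
  apply: (@generic _ _ _ _ _ f alpha (Q3 (topf hdim) (shf hdim)) D HD).
  + move=> E M HMe HQ q Hq; exact: good3 HMe HQ q Hq.
  + exists b; split => //.
    have -> : Q3 (topf hdim) (shf hdim) (fun s => matof f (alpha s) (pluecker b)) =
              Q3 (topf hdim) (shf hdim) (M3 n0 n1) by rewrite /Q3 !Hb.
    exact: Q3_neq0.
Qed.
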